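(* Let $\mathbf{x}=x_1,\ldots,x_n$ and $\mathbf{u}=u_1,\ldots,u_m$ be differential indeterminates over $\mathbb{C}$, and let $\mathbf{f}=f_1,\ldots,f_n\in\mathbb{C}[\mathbf{x},\mathbf{u}]$ and $\mathbf{g}=g_1,\ldots,g_s\in\mathbb{C}[\mathbf{x},\mathbf{u}]$ be polynomials such that the polynomial ideal $(\mathbf{g})\subseteq\mathbb{C}[\mathbf{x},\mathbf{u}]$ is radical and $0$-dimensional. Then $$1\in[\dot{\mathbf{x}}-\mathbf{f},\mathbf{g}]\subseteq\mathbb{C}\{\mathbf{x},\mathbf{u}\}\quad\Longleftrightarrow\quad 1\in(\dot{\mathbf{x}}-\mathbf{f},\mathbf{g},\dot{\mathbf{g}})\subseteq\mathbb{C}[\mathbf{x},\mathbf{u},\dot{\mathbf{x}},\dot{\mathbf{u}}].$$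
   Context: $\mathbb{C}\{\mathbf{x},\mathbf{u}\}$ is the differential polynomial ring $\mathbb{C}[x_j^{(p)},u_k^{(p)}: p\in\mathbb{N}_0]$ with derivation $x_j^{(p)}\mapsto x_j^{(p+1)}$, $u_k^{(p)}\mapsto u_k^{(p+1)}$, and $\mathbb{C}$ as constants; $\dot{z}$ denotes $z^{(1)}$, and for a family of polynomials $\mathbf{h}$, $\dot{\mathbf{h}}$ denotes the family of their (total) derivatives. $[\mathbf{h}]$ denotes the differential ideal generated by $\mathbf{h}$, and $(\cdot)$ the ordinary polynomial ideal in the indicated polynomial ring. $\dot{\mathbf{x}}-\mathbf{f}$ denotes $\dot x_1-f_1,\ldots,\dot x_n-f_n$. *)

(* Defs.v *)
(* multinomials' monoid algebras {malg C[{cmonom V}]} give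
   polynomial rings over C in an arbitrary (possibly infinite) set V of
   variables. *)
From HB Require Import structures.
From mathcomp Require Import all_boot all_algebra.
From mathcomp Require Import reals Rstruct complex.
From mathcomp Require Import finmap.
From mathcomp.multinomials Require Import monalg.
Set Implicit Arguments. Unset Strict Implicit. Unset Printing Implicit Defensive.
Import GRing.Theory.
Local Open Scope ring_scope.

Definition C : fieldType := (Rdefinitions.R)[i].

Definition PolyRing (V : choiceType) := {malg C[{cmonom V}]}.

Definition var (V : choiceType) (v : V) : PolyRing V := mkmalgU (ucm v) (1 : C).

Definition rename (V W : choiceType) (sigma : V -> W) (p : PolyRing V)
  : PolyRing W :=
  \sum_(k <- msupp p) (p@_k : C) *: \prod_(v <- finsupp k) var (sigma v) ^+ (k v).

(* Total derivative of p, written out by the chain rule: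
     sum over monomials c*k of p and variables w of k of
     emb (d(c*k)/dw) * (derivative of the variable w),
   where emb embeds the polynomials into the target ring and dv w is the
   variable representing the derivative of w. *)
Definition tot_deriv (V W : choiceType) (emb : PolyRing V -> PolyRing W)
  (dv : V -> W) (p : PolyRing V) : PolyRing W :=
  \sum_(k <- msupp p) \sum_(w <- finsupp k)
     emb (mkmalgU (divcm k (ucm w)) (p@_k *+ k w)) * var (dv w).

(* Base variables x_1..x_n (inl j) and u_1..u_m (inr k). *)
Definition Vb (n m : nat) : choiceType := ('I_n + 'I_m)%type.

Definition Pxu (n m : nat) := PolyRing (Vb n m).
(* C[x,u,x',u'] : variable (v, i) is the i-th derivative of v, i in {0,1} *)
Definition Pxu1 (n m : nat) := PolyRing (Vb n m * 'I_2)%type.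
(* C{x,u} : variable (v, p) is v^(p) *)
Definition DPxu (n m : nat) := PolyRing (Vb n m * nat)%type.

Definition Dder (n m : nat) : DPxu n m -> DPxu n m :=
  @tot_deriv _ _ id (fun w : Vb n m * nat => (w.1, w.2.+1)).

Definition emb_D (n m : nat) : Pxu n m -> DPxu n m :=
  @rename _ (Vb n m * nat)%type (fun v => (v, 0%N)).
Definition emb_1 (n m : nat) : Pxu n m -> Pxu1 n m :=
  @rename _ (Vb n m * 'I_2)%type (fun v => (v, ord0)).

Definition dot1 (n m : nat) (g : Pxu n m) : Pxu1 n m :=
  @tot_deriv _ (Vb n m * 'I_2)%type (@emb_1 n m)
     (fun v => (v, ord_max)) g.

Definition is_ideal (R : comPzRingType) (I : R -> Prop) :=
  [/\ I 0, (forall a b, I a -> I b -> I (a + b)) & (forall r a, I a -> I (r * a))].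

Definition in_ideal (R : comPzRingType) (G : R -> Prop) (a : R) :=
  forall I, is_ideal I -> (forall b, G b -> I b) -> I a.

Definition in_diff_ideal (R : comPzRingType) (d : R -> R) (G : R -> Prop) (a : R) :=
  forall I, is_ideal I -> (forall b, I b -> I (d b)) -> (forall b, G b -> I b) -> I a.

Definition radical_ideal (R : comPzRingType) (G : R -> Prop) :=
  forall (a : R) (k : nat), in_ideal G (a ^+ k) -> in_ideal G a.

(* (G) is 0-dimensional: the quotient PolyRing V / (G) is a
   finite-dimensional C-vector space. *)
Definition zero_dim_ideal (V : choiceType) (G : PolyRing V -> Prop) :=
  exists b : seq (PolyRing V), forall a : PolyRing V,
    exists c : 'I_(size b) -> C,
      in_ideal G (a - \sum_(i < size b) c i *: b`_i).

Definition gens_D (n m s : nat) (f : 'I_n -> Pxu n m) (g : 'I_s -> Pxu n m)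
  (h : DPxu n m) : Prop :=
  (exists j : 'I_n, h = var ((inl j : Vb n m), 1%N) - emb_D (f j))
  \/ (exists i : 'I_s, h = emb_D (g i)).

Definition gens_1 (n m s : nat) (f : 'I_n -> Pxu n m) (g : 'I_s -> Pxu n m)
  (h : Pxu1 n m) : Prop :=
  [\/ (exists j : 'I_n, h = var ((inl j : Vb n m), ord_max) - emb_1 (f j)),
      (exists i : 'I_s, h = emb_1 (g i))
    | (exists i : 'I_s, h = dot1 (g i))].

(* Main.v *)
Require Import Defs.
From HB Require Import structures.
From mathcomp Require Import all_boot all_algebra all_field.
From mathcomp Require Import reals Rstruct complex.
From mathcomp Require Import finmap.
From mathcomp.multinomials Require Import monalg.
From Stdlib Require Import FunctionalExtensionality.
Set Implicit Arguments. Unset Strict Implicit. Unset Printing Implicit Defensive.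
Import GRing.Theory.
Local Open Scope ring_scope.


Section Gen.
Variable V : choiceType.

Lemma cm_split (k : cmonom V) w : w \in finsupp k ->
  k = mulcm (ucm w) (divcm k (ucm w)).
Proof.
move=> wk; apply/eqP/cmP => i; rewrite mulcmE divcmE ucmE.
case: eqP => [<-|_]; last by rewrite subn0.
by move: wk; rewrite -cmE_neq0 => h; rewrite add1n subn1 prednK // lt0n.
Qed.

Lemma U_split (k : cmonom V) w (c : C) : w \in finsupp k ->
  mkmalgU k c = var w * mkmalgU (divcm k (ucm w)) c.
Proof.
move=> wk; rewrite /var malgM_def fgmulUU mul1r.
by rewrite {1}(cm_split wk).
Qed.

Lemma monom_ind (Q : PolyRing V -> Prop) :
  Q 0 -> (forall p q, Q p -> Q q -> Q (p + q)) ->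
  (forall c, Q (c%:MP)) -> (forall w q, Q q -> Q (var w * q)) -> forall p, Q p.
Proof.
move=> Q0 QD QC QV p; rewrite (monalgE p); apply: (big_ind Q) => // k _.
move: (p@_k) => c.
move: {2}(mdeg k) (leqnn (mdeg k)) => N; elim: N k => [|N IHN] k.
  by rewrite leqn0 mdeg_eq0 => /eqP->; apply: QC.
move=> lek.
case: (fset_0Vmem (finsupp k)) => [k0|[w wk]].
  have -> : k = @onecm V by apply: mdeg_eq0I; rewrite mdegE k0 big_nil.
  exact: QC.
rewrite (U_split c wk); apply: QV; apply: IHN.
move: lek; rewrite {1}(cm_split wk).
have -> : mdeg (mulcm (ucm w) (divcm k (ucm w))) = (mdeg (ucm w) + mdeg (divcm k (ucm w)))%N by exact: mdegM.
by rewrite mdegU.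
Qed.
End Gen.

Section Sub.
Variables V W : choiceType.
Variable s : V -> PolyRing W.

Definition hmon (k : cmonom V) : PolyRing W := \prod_(v <- finsupp k) s v ^+ k v.

Lemma hmonEw (k : cmonom V) (S : {fset V}) : (finsupp k `<=` S)%fset ->
  hmon k = \prod_(v <- S) s v ^+ k v.
Proof.
move=> le; rewrite /hmon (big_fset_incl _ le) // => x _.
by rewrite -cmE_eq0 => /eqP ->; rewrite expr0.
Qed.

Lemma hmon_mmorph : mmorphism hmon.
Proof.
split.
  move=> k l; rewrite (hmonEw (S := (finsupp k `|` finsupp l)%fset)); last by rewrite mdomD.
  rewrite (hmonEw (fsubsetUl (finsupp k) (finsupp l))).
  rewrite (hmonEw (fsubsetUr (finsupp k) (finsupp l))) -big_split /=.
  by apply: eq_bigr => v _; rewrite cmM exprD.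
by rewrite /hmon mdom1 big_nil.
Qed.

HB.instance Definition _ := isMultiplicative.Build (cmonom V) (PolyRing W) hmon hmon_mmorph.

Definition sub (p : PolyRing V) : PolyRing W := mmap (@malgC (cmonom W) C) hmon p.

Lemma subD : {morph sub : x y / x + y}.
Proof. exact: raddfD. Qed.
Lemma subM : {morph sub : x y / x * y}.
Proof. exact: rmorphM. Qed.
Lemma sub0 : sub 0 = 0.
Proof. exact: raddf0. Qed.
Lemma sub1 : sub 1 = 1.
Proof. exact: rmorph1. Qed.
Lemma subC c : sub c%:MP = c%:MP.
Proof. exact: mmapC. Qed.
Lemma sub_var v : sub (var v) = s v.
Proof.
rewrite /sub /var mmapU /= mpolyC1E mul1r /hmon mdomU big_seq_fset1.
by rewrite cmUU expr1.
Qed.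
End Sub.

Lemma rename_sub (V W : choiceType) (sigma : V -> W) p :
  rename sigma p = sub (fun v => var (sigma v)) p.
Proof.
rewrite /rename /sub mmapE; apply: eq_bigr => k _.
by rewrite mul_malgC.
Qed.

Opaque var.
Lemma sub_uniq (V W : choiceType) (F : PolyRing V -> PolyRing W) :
  {morph F : x y / x + y} -> {morph F : x y / x * y} ->
  (forall c, F c%:MP = c%:MP) -> forall p, F p = sub (fun v => F (var v)) p.
Proof.
move=> FD FM FC.
Timeout 20 apply: monom_ind.
- Timeout 20 rewrite -malgC0E. Timeout 20 rewrite subC. Timeout 20 exact: FC.
- Timeout 20 by move=> p q Hp Hq; rewrite FD subD Hp Hq.
- Timeout 20 by move=> c; rewrite subC; exact: FC.
- Timeout 20 by move=> w q Hq; rewrite FM subM Hq sub_var.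
Qed.

Definition Upack : {f : forall V : choiceType, cmonom V -> C -> PolyRing V |
  forall V k c, f V k c = mkmalgU k c}.
Proof. by exists (fun V k c => mkmalgU k c). Qed.
Definition U {V : choiceType} (k : cmonom V) (c : C) : PolyRing V := sval Upack V k c.
Lemma UE (V : choiceType) (k : cmonom V) c : U k c = mkmalgU k c.
Proof. exact: (svalP Upack). Qed.

Section Ulem.
Variable V : choiceType.
Implicit Types k l : cmonom V.
Lemma varU (v : V) : var v = U (ucm v) 1.
Proof. by rewrite UE. Qed.
Lemma UD k a b : U k (a + b) = U k a + U k b.
Proof. rewrite !UE; exact: monalgUD. Qed.
Lemma U0 k : U k 0 = 0.
Proof. rewrite UE; exact: monalgU0. Qed.
Lemma UM k l a b : U k a * U l b = U (mulcm k l) (a * b).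
Proof. rewrite !UE; exact: fgmulUU. Qed.
Lemma UC (c : C) : U (@onecm V) c = c%:MP.
Proof. by rewrite UE. Qed.
Lemma UU k c : (U k c)@_k = c.
Proof. rewrite UE; exact: mcoeffUU. Qed.
Lemma msuppU_le' k c : (msupp (U k c) `<=` [fset k])%fset.
Proof. rewrite UE; exact: msuppU_le. Qed.
Lemma monalgE' (p : PolyRing V) : p = \sum_(k <- msupp p) U k p@_k.
Proof.
rewrite {1}(monalgE p); apply: eq_bigr => k _; by rewrite UE.
Qed.
End Ulem.

Lemma gen_leib (R' R : ringType) (f : R' -> R) (fD : {morph f : x y / x + y})
  (fM : {morph f : x y / x * y}) (a b c d : R') (v : R) :
  f (a * b + c * d) * v = f a * (f b * v) + f c * (f d * v).
Proof. by rewrite fD !fM mulrDl !mulrA. Qed.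

Section TD.
Variables V W : choiceType.
Variable e : PolyRing V -> PolyRing W.
Variable dv : V -> W.
Hypothesis eD : {morph e : x y / x + y}.
Hypothesis eM : {morph e : x y / x * y}.

Lemma e0 : e 0 = 0.
Proof.
have h := eD 0 0; rewrite addr0 in h.
transitivity (e 0 + e 0 - e 0); first by rewrite addrK.
by rewrite -h subrr.
Qed.

Definition TT (k : cmonom V) (c : C) : PolyRing W :=
  \sum_(w <- finsupp k) e (U (divcm k (ucm w)) (c *+ k w)) * var (dv w).

Lemma TD_def p : tot_deriv e dv p = \sum_(k <- msupp p) TT k p@_k.
Proof.
by apply: eq_bigr => k _; apply: eq_bigr => w _; rewrite UE.
Qed.

Lemma TTEw (k : cmonom V) (c : C) (S : {fset V}) : (finsupp k `<=` S)%fset ->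
  TT k c = \sum_(w <- S) e (U (divcm k (ucm w)) (c *+ k w)) * var (dv w).
Proof.
move=> le; rewrite /TT (big_fset_incl _ le) // => x _.
by rewrite -cmE_eq0 => /eqP ->; rewrite mulr0n U0 e0 mul0r.
Qed.

Lemma TT_add k a b : TT k (a + b) = TT k a + TT k b.
Proof.
rewrite /TT -big_split /=; apply: eq_bigr => w _.
by rewrite mulrnDl UD eD mulrDl.
Qed.

Lemma TT0 k : TT k 0 = 0.
Proof. by rewrite /TT big1 // => w _; rewrite mul0rn U0 e0 mul0r. Qed.

Lemma TD_Ew p (S : {fset cmonom V}) : (msupp p `<=` S)%fset ->
  tot_deriv e dv p = \sum_(k <- S) TT k p@_k.
Proof.
move=> le; rewrite TD_def (big_fset_incl _ le) // => x _ /mcoeff_outdom ->.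
exact: TT0.
Qed.

Lemma TD_add p q : tot_deriv e dv (p + q) = tot_deriv e dv p + tot_deriv e dv q.
Proof.
have lp : (msupp p `<=` msupp p `|` msupp q)%fset by apply: fsubsetUl.
have lq : (msupp q `<=` msupp p `|` msupp q)%fset by apply: fsubsetUr.
rewrite (TD_Ew lp) (TD_Ew lq) (TD_Ew (msuppD_le p q)) -big_split /=.
by apply: eq_bigr => k _; rewrite mcoeffD TT_add.
Qed.

Lemma TD0 : tot_deriv e dv 0 = 0.
Proof. by rewrite /tot_deriv msupp0 big_nil. Qed.

Lemma TD_U k c : tot_deriv e dv (U k c) = TT k c.
Proof. by rewrite (TD_Ew (msuppU_le' _ _)) big_seq_fset1 UU. Qed.

Lemma Ushift (k l : cmonom V) w (a b : C) :
  U (divcm (mulcm k l) (ucm w)) (a * b *+ l w)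
  = U k a * U (divcm l (ucm w)) (b *+ l w).
Proof.
case: (l w =P 0%N) => [->|lw0]; first by rewrite !mulr0n !U0 mulr0.
have E : divcm (mulcm k l) (ucm w) = mulcm k (divcm l (ucm w)).
  apply/eqP/cmP => i; rewrite mulcmE !divcmE mulcmE ucmE.
  case: eqP => [<-|_]; last by rewrite !subn0.
  by move/eqP: lw0; rewrite -lt0n => h; rewrite addnBA.
by rewrite UM E mulrnAr.
Qed.

Lemma TD_UU k a l b :
  tot_deriv e dv (U k a * U l b) =
  e (U k a) * tot_deriv e dv (U l b) + e (U l b) * tot_deriv e dv (U k a).
Proof.
rewrite UM !TD_U.
set S := (finsupp k `|` finsupp l)%fset.
have lk : (finsupp k `<=` S)%fset by apply: fsubsetUl.
have ll : (finsupp l `<=` S)%fset by apply: fsubsetUr.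
have lkl : (finsupp (mulcm k l) `<=` S)%fset.
  have := fsubset_refl (finsupp (mmul k l)); rewrite {2}mdomD; exact.
rewrite (TTEw _ lk) (TTEw _ ll) (TTEw _ lkl) !big_distrr -big_split /=.
apply: eq_bigr => w _.
have h1 : U (divcm (mulcm k l) (ucm w)) (a * b *+ mulcm k l w) =
   U k a * U (divcm l (ucm w)) (b *+ l w) + U l b * U (divcm k (ucm w)) (a *+ k w).
  rewrite mulcmE mulrnDr UD (addrC (U _ (a * b *+ k w))) Ushift; congr (_ + _).
  by rewrite mulrC (mulcmC k l) Ushift.
rewrite h1; exact: gen_leib.
Qed.
End TD.

Section GenL.
Variables (R' : ringType) (R : comRingType).
Variables (D e : R' -> R).
Hypothesis DD : {morph D : x y / x + y}.
Hypothesis eD : {morph e : x y / x + y}.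
Definition Leib p q := D (p * q) = e p * D q + e q * D p.
Lemma Leib_addl p1 p2 q : Leib p1 q -> Leib p2 q -> Leib (p1 + p2) q.
Proof.
rewrite /Leib mulrDl !DD !eD => -> ->.
by rewrite !mulrDl !mulrDr -!addrA; congr (_ + _); rewrite !addrA; congr (_ + _); rewrite addrC.
Qed.
Lemma Leib_addr p q1 q2 : Leib p q1 -> Leib p q2 -> Leib p (q1 + q2).
Proof.
rewrite /Leib mulrDr !DD !eD => -> ->.
by rewrite !mulrDl !mulrDr -!addrA; congr (_ + _); rewrite !addrA; congr (_ + _); rewrite addrC.
Qed.
Lemma D0' : D 0 = 0.
Proof.
have h := DD 0 0; rewrite addr0 in h.
transitivity (D 0 + D 0 - D 0); first by rewrite addrK.
by rewrite -h subrr.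
Qed.
Lemma e0' : e 0 = 0.
Proof.
have h := eD 0 0; rewrite addr0 in h.
transitivity (e 0 + e 0 - e 0); first by rewrite addrK.
by rewrite -h subrr.
Qed.
Lemma Leib0l q : Leib 0 q.
Proof. by rewrite /Leib mul0r D0' e0' mulr0 mul0r addr0. Qed.
Lemma Leib0r p : Leib p 0.
Proof. by rewrite /Leib mulr0 D0' e0' mulr0 mul0r addr0. Qed.
End GenL.

Section TD2.
Variables V W : choiceType.
Variable e : PolyRing V -> PolyRing W.
Variable dv : V -> W.
Hypothesis eD : {morph e : x y / x + y}.
Hypothesis eM : {morph e : x y / x * y}.
Hypothesis e1 : e 1 = 1.

Lemma TD_addm : {morph tot_deriv e dv : x y / x + y}.
Proof. exact: TD_add. Qed.

Lemma TD_mul p q : tot_deriv e dv (p * q) =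
  e p * tot_deriv e dv q + e q * tot_deriv e dv p.
Proof.
have L : forall p, Leib (tot_deriv e dv) e p q.
  move=> p'; rewrite [q](monalgE' q).
  apply: (big_ind (Leib (tot_deriv e dv) e p')); first exact: (Leib0r TD_addm eD).
    by move=> ? ?; apply: Leib_addr; [exact: TD_addm|exact: eD].
  move=> l _; rewrite [p'](monalgE' p').
  apply: (big_ind (fun x => Leib (tot_deriv e dv) e x _)); first exact: (Leib0l TD_addm eD).
    by move=> ? ?; apply: Leib_addl; [exact: TD_addm|exact: eD].
  move=> k _; exact: TD_UU.
exact: L.
Qed.

Lemma U1 : U (@onecm V) 1 = 1.
Proof. rewrite UE; exact: mpolyC1E. Qed.

Lemma TD_C c : tot_deriv e dv c%:MP = 0.
Proof.
rewrite -UC TD_U // /TT.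
have -> : finsupp (@onecm V) = fset0 by exact: mdom1.
by rewrite big_nil.
Qed.

Lemma TD_var v : tot_deriv e dv (var v) = var (dv v).
Proof.
transitivity (tot_deriv e dv (U (ucm v) 1)); first exact: (congr1 _ (varU v)).
rewrite TD_U; last exact: eD.
rewrite /TT mdomU big_seq_fset1 cmUU mulr1n.
have -> : divcm (ucm v) (ucm v) = @onecm V.
  by apply/eqP/cmP => i; rewrite divcmE subnn onecmE.
rewrite U1 e1 mul1r; reflexivity.
Qed.
End TD2.

Lemma sub_ext (V W : choiceType) (s1 s2 : V -> PolyRing W) : (forall v, s1 v = s2 v) ->
  forall p, sub s1 p = sub s2 p.
Proof.
move=> H p; have E : s1 = s2 := functional_extensionality _ _ H.
by rewrite E.
Qed.

Section SubGen.
Variables V W X : choiceType.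



Lemma sub_sum (s : V -> PolyRing W) (I : Type) (r : seq I) (P : pred I) (F : I -> PolyRing V) :
  sub s (\sum_(i <- r | P i) F i) = \sum_(i <- r | P i) sub s (F i).
Proof. exact: (big_morph _ (@subD _ _ s) (sub0 s)). Qed.

Lemma sub_comp (s : V -> PolyRing W) (t : W -> PolyRing X) p :
  sub t (sub s p) = sub (fun v => sub t (s v)) p.
Proof.
have -> : sub (fun v => sub t (s v)) p = sub (fun v => sub t (sub s (var v))) p.
  apply: sub_ext => v; by rewrite sub_var.

apply: (sub_uniq (F := fun p => sub t (sub s p))).
- by move=> x y; rewrite (subD s x y) (subD t).
- by move=> x y; rewrite (subM s x y) (subM t).
- by move=> c; rewrite (subC s c) (subC t c).
Qed.

Lemma sub_id (p : PolyRing V) : sub (@var V) p = p.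
Proof.
symmetry; apply: (sub_uniq (F := id)) => //.
Qed.
End SubGen.

Lemma der_uniq (V W : choiceType) (e d1 d2 : PolyRing V -> PolyRing W) :
  {morph d1 : x y / x + y} -> {morph d2 : x y / x + y} ->
  (forall a b, d1 (a * b) = e a * d1 b + e b * d1 a) ->
  (forall a b, d2 (a * b) = e a * d2 b + e b * d2 a) ->
  (forall c, d1 c%:MP = 0) -> (forall c, d2 c%:MP = 0) ->
  (forall v, d1 (var v) = d2 (var v)) -> forall p, d1 p = d2 p.
Proof.
move=> D1 D2 L1 L2 C1 C2 Hv; apply: monom_ind.
- by rewrite (D0' D1) (D0' D2).
- by move=> p q Hp Hq; rewrite D1 D2 Hp Hq.
- by move=> c; rewrite C1 C2.
- by move=> w q Hq; rewrite L1 L2 Hq Hv.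
Qed.

Lemma morphM0 (R' R : ringType) (f : R' -> R) : {morph f : x y / x * y} ->
  forall x y, f y = 0 -> f (x * y) = 0.
Proof. by move=> fM x y h; rewrite fM h mulr0. Qed.

Lemma genL2 (R1 R2 : ringType) (f : R1 -> R2) : {morph f : x y / x + y} ->
  {morph f : x y / x * y} -> forall x1 y1 x2 y2 z1 z2, f x1 = z1 -> f x2 = z2 ->
  f (x1 * y1 + x2 * y2) = z1 * f y1 + z2 * f y2.
Proof. by move=> fD fM x1 y1 x2 y2 z1 z2 h1 h2; rewrite fD !fM h1 h2. Qed.

Section Conc.
Variables n m : nat.
Local Notation VB := (Vb n m).

Definition psi (p : Pxu1 n m) : DPxu n m :=
  sub (fun w : VB * 'I_2 => var ((w.1, nat_of_ord w.2) : VB * nat)) p.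
Definition phi (p : DPxu n m) : Pxu n m :=
  sub (fun w : VB * nat => if w.2 is 0%N then var w.1 else 0) p.

Lemma emb_1E p : emb_1 p = sub (fun v : VB => var ((v, ord0) : VB * 'I_2)) p.
Proof. exact: rename_sub. Qed.
Lemma emb_DE p : emb_D p = sub (fun v : VB => var ((v, 0%N) : VB * nat)) p.
Proof. exact: rename_sub. Qed.

Lemma emb_1D : {morph @emb_1 n m : x y / x + y}.
Proof. by move=> x y; rewrite !emb_1E subD. Qed.
Lemma emb_1M : {morph @emb_1 n m : x y / x * y}.
Proof. by move=> x y; rewrite !emb_1E subM. Qed.
Lemma emb_11 : emb_1 1 = 1 :> Pxu1 n m.
Proof. by rewrite emb_1E sub1. Qed.
Lemma emb_DD : {morph @emb_D n m : x y / x + y}.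
Proof. by move=> x y; rewrite !emb_DE subD. Qed.
Lemma emb_DM : {morph @emb_D n m : x y / x * y}.
Proof. by move=> x y; rewrite !emb_DE subM. Qed.
Lemma emb_DC c : emb_D c%:MP = c%:MP :> DPxu n m.
Proof. by rewrite emb_DE subC. Qed.
Lemma emb_Dvar v : emb_D (var v) = var ((v, 0%N) : VB * nat) :> DPxu n m.
Proof. by rewrite emb_DE sub_var. Qed.
Lemma emb_1var v : emb_1 (var v) = var ((v, ord0) : VB * 'I_2) :> Pxu1 n m.
Proof. by rewrite emb_1E sub_var. Qed.

Lemma psiD : {morph psi : x y / x + y}.
Proof. exact: subD. Qed.
Lemma psiM : {morph psi : x y / x * y}.
Proof. exact: subM. Qed.
Lemma psi1 : psi 1 = 1.
Proof. exact: sub1. Qed.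
Lemma phiD : {morph phi : x y / x + y}.
Proof. exact: subD. Qed.
Lemma phiM : {morph phi : x y / x * y}.
Proof. exact: subM. Qed.
Lemma phi1 : phi 1 = 1.
Proof. exact: sub1. Qed.

Lemma psi_emb1 p : psi (emb_1 p) = emb_D p.
Proof.
rewrite emb_1E /psi sub_comp emb_DE; apply: sub_ext => v.
by rewrite sub_var.
Qed.

Lemma phi_embD p : phi (emb_D p) = p.
Proof.
rewrite emb_DE /phi sub_comp.
transitivity (sub (@var _) p); last exact: sub_id.
by apply: sub_ext => v; rewrite sub_var.
Qed.

Lemma phi_Dder b : phi (Dder b) = 0.
Proof.
rewrite /Dder /tot_deriv /phi sub_sum big1 // => k _.
rewrite sub_sum big1 // => w _.
apply: morphM0; first exact: subM.
by rewrite sub_var.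
Qed.

Lemma Did : {morph (@id (DPxu n m)) : x y / x + y}.
Proof. by []. Qed.
Lemma DidM : {morph (@id (DPxu n m)) : x y / x * y}.
Proof. by []. Qed.

Lemma psi_dot1 g : psi (dot1 g) = Dder (emb_D g).
Proof.
apply: (@der_uniq _ _ (@emb_D n m) (fun g => psi (dot1 g)) (fun g => Dder (emb_D g))).
- by move=> x y; rewrite /dot1 TD_add ?psiD //; exact: emb_1D.
- by move=> x y; rewrite emb_DD /Dder TD_add.
- move=> a b; rewrite /dot1 TD_mul; [|exact: emb_1D|exact: emb_1M].
  apply: genL2; [exact: psiD|exact: psiM|exact: psi_emb1|exact: psi_emb1].
- move=> a b; rewrite emb_DM /Dder TD_mul //.
- move=> c; rewrite /dot1 TD_C; [exact: sub0|exact: emb_1D].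
- by move=> c; rewrite emb_DC /Dder TD_C.
- move=> v; rewrite /dot1 TD_var; try exact: emb_1D; try exact: emb_1M; try exact: emb_11.
  rewrite emb_Dvar /Dder TD_var; try exact: Did; try exact: DidM; try reflexivity.
  rewrite /psi sub_var; reflexivity.
Qed.
End Conc.

Lemma morph0 (R S : zmodType) (f : R -> S) : {morph f : x y / x + y} -> f 0 = 0.
Proof.
move=> fD; have h := fD 0 0; rewrite addr0 in h.
transitivity (f 0 + f 0 - f 0); first by rewrite addrK.
by rewrite -h subrr.
Qed.

Section Ideals.
Variable R : comPzRingType.
Implicit Types G H : R -> Prop.

Lemma idl_is G : is_ideal (in_ideal G).
Proof.
split.
- by move=> I [] .
- by move=> a b Ha Hb I HI HG; case: (HI) => _ HD _; apply: HD; [apply: Ha|apply: Hb].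
- by move=> r a Ha I HI HG; case: (HI) => _ _ HM; apply: HM; apply: Ha.
Qed.

Lemma idl_gen G b : G b -> in_ideal G b.
Proof. by move=> Gb I _ HG; apply: HG. Qed.
Lemma idl0 G : in_ideal G 0.
Proof. by case: (idl_is G). Qed.
Lemma idlD G a b : in_ideal G a -> in_ideal G b -> in_ideal G (a + b).
Proof. by case: (idl_is G) => _ H _; apply: H. Qed.
Lemma idlM G r a : in_ideal G a -> in_ideal G (r * a).
Proof. by case: (idl_is G) => _ _ H; apply: H. Qed.
Lemma idlMr G r a : in_ideal G a -> in_ideal G (a * r).
Proof. by move=> h; rewrite mulrC; apply: idlM. Qed.
Lemma idlN G a : in_ideal G a -> in_ideal G (- a).
Proof. by move=> h; rewrite -mulN1r; apply: idlM. Qed.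
Lemma idlB G a b : in_ideal G a -> in_ideal G b -> in_ideal G (a - b).
Proof. by move=> ha hb; apply: idlD => //; apply: idlN. Qed.
Lemma idl_sum G (I : Type) (r : seq I) (P : pred I) (F : I -> R) :
  (forall i, P i -> in_ideal G (F i)) -> in_ideal G (\sum_(i <- r | P i) F i).
Proof.
move=> h; apply: (big_ind (in_ideal G)); [exact: idl0|exact: idlD|exact: h].
Qed.
End Ideals.

Lemma idl_transport (R S : comPzRingType) (f : R -> S) (G : R -> Prop) (H : S -> Prop) :
  {morph f : x y / x + y} -> {morph f : x y / x * y} ->
  (forall b, G b -> in_ideal H (f b)) -> forall a, in_ideal G a -> in_ideal H (f a).
Proof.
move=> fD fM hG a ha; apply: (ha (fun a => in_ideal H (f a))) => //.
split.
- by rewrite (morph0 fD); apply: idl0.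
- by move=> x y hx hy; rewrite fD; apply: idlD.
- by move=> r x hx; rewrite fM; apply: idlM.
Qed.

Lemma morphB' (R S : zmodType) (f : R -> S) : {morph f : x y / x + y} ->
  forall a b, f (a - b) = f a - f b.
Proof.
move=> fD a b; have h : f (- b) = - f b.
  by apply/eqP; rewrite -subr_eq0 opprK -fD addNr (morph0 fD).
by rewrite fD h.
Qed.

Section EvDer.
Variables (R S : comNzRingType).
Variable kap : {rmorphism C -> R}.
Variables (e d : R -> S) (y : R).
Hypotheses (eD : {morph e : x y / x + y}) (eM : {morph e : x y / x * y})
  (dD : {morph d : x y / x + y})
  (dM : forall a b, d (a * b) = e a * d b + e b * d a)
  (dK : forall c, d (kap c) = 0).

Definition ev (p : {poly C}) : R := (map_poly kap p).[y].
Lemma evD p q : ev (p + q) = ev p + ev q.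
Proof. by rewrite /ev rmorphD hornerD. Qed.
Lemma evM p q : ev (p * q) = ev p * ev q.
Proof. by rewrite /ev rmorphM hornerM. Qed.
Lemma ev1 : ev 1 = 1.
Proof. by rewrite /ev rmorph1 hornerC. Qed.
Lemma evX : ev 'X = y.
Proof. by rewrite /ev map_polyX hornerX. Qed.
Lemma evC c : ev c%:P = kap c.
Proof. by rewrite /ev map_polyC hornerC. Qed.

Lemma evXn p k : ev (p ^+ k) = ev p ^+ k.
Proof. by elim: k => [|k IH]; rewrite ?expr0 ?ev1 // !exprS evM IH. Qed.
Lemma ev_bez u1 u2 q1 q2 : u1 * q1 + u2 * q2 = 1 -> ev u1 * ev q1 + ev u2 * ev q2 = 1.
Proof. by move=> h; rewrite -!evM -evD h ev1. Qed.

Lemma ev_der p : d (ev p) = e (ev p^`()) * d y.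
Proof.
elim/poly_ind: p => [|p c IH].
  by rewrite deriv0 /ev rmorph0 horner0 (morph0 dD) (morph0 eD) mul0r.
rewrite derivMXaddC !evD !evM evX evC dD dM dK addr0 IH eD eM.
by rewrite mulrDl [e y * _]mulrC -!mulrA [e y * _]mulrC.
Qed.
End EvDer.

Lemma lin_comb (K : fieldType) (A : lmodType K) (N : nat) (Y : 'I_N.+1 -> A)
  (B : 'I_N -> A) (c : 'I_N.+1 -> 'I_N -> K) (v : 'rV[K]_N.+1) :
  v *m (\matrix_(i, l) c i l) = 0 ->
  \sum_i v 0 i *: (Y i - \sum_l c i l *: B l) = \sum_i v 0 i *: Y i.
Proof.
move=> vM; rewrite -[RHS]subr0; under eq_bigr do rewrite scalerBr.
rewrite sumrB; congr (_ - _).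
under eq_bigr do rewrite scaler_sumr.
rewrite exchange_big /= big1 // => l _.
under eq_bigr do rewrite scalerA.
rewrite -scaler_suml.
have -> : \sum_i v 0 i * c i l = (v *m \matrix_(i, l) c i l) 0 l.
  by rewrite mxE; apply: eq_bigr => i _; rewrite mxE.
by rewrite vM mxE scale0r.
Qed.

Lemma ker_nz (K : fieldType) (N : nat) (M : 'M[K]_(N.+1, N)) :
  exists2 v : 'rV[K]_N.+1, v != 0 & v *m M = 0.
Proof.
have : kermx M != 0.
  rewrite -mxrank_eq0 mxrank_ker -lt0n subn_gt0.
  exact: leq_ltn_trans (rank_leq_col M) (ltnSn N).
case: (pickP (fun i => row i (kermx M) != 0)) => [i0 Hi0 _|H].
  by exists (row i0 (kermx M)) => //; rewrite -row_mul mulmx_ker row0.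
move/negP; case; apply/eqP/row_matrixP => i; rewrite row0.
by move: (H i) => /= /negbFE /eqP.
Qed.

Lemma idlZ (V : choiceType) (G : PolyRing V -> Prop) (k : C) a :
  in_ideal G a -> in_ideal G (k *: a).
Proof. by move=> h; rewrite -mul_malgC; apply: idlM. Qed.

Lemma zd_poly (V : choiceType) (G : PolyRing V -> Prop) (y : PolyRing V) :
  zero_dim_ideal G ->
  exists p : {poly C}, p != 0 /\ in_ideal G (ev (@malgC (cmonom V) C) y p).
Proof.
case=> b Hb.
have [c Hc] := fin_all_exists (fun i : 'I_(size b).+1 => Hb (y ^+ i)).
have [v vnz vM] := ker_nz (\matrix_(i, l) c i l).
exists (\poly_(i < (size b).+1) v 0 (inord i)); split.
  have [i vi] : exists i, v 0 i != 0.
    apply/existsP; apply: contraNT vnz => /existsPn H.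
    by apply/eqP/rowP => i; rewrite mxE; apply/eqP; rewrite -[_ == _]negbK H.
  apply: contraNneq vi => p0.
  have := coef_poly (size b).+1 (fun i => v 0 (inord i)) i.
  by rewrite p0 coef0 ltn_ord inord_val => <-.
have -> : ev (@malgC (cmonom V) C) y (\poly_(i < (size b).+1) v 0 (inord i))
    = \sum_(i < (size b).+1) v 0 i *: y ^+ i.
  rewrite /ev (horner_coef_wide _ (n := (size b).+1)); last first.
    exact: leq_trans (size_poly _ _) (size_poly _ _).
  apply: eq_bigr => i _.
  rewrite coef_map /= (coef_poly (size b).+1 (fun i0 => v 0 (inord i0)) i) ltn_ord inord_val mul_malgC. reflexivity.
rewrite -(lin_comb (fun i => y ^+ i) (fun l => b`_l) vM).
apply: idl_sum => i _; apply: idlZ; exact: Hc.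
Qed.

Lemma sqfreeF (F : closedFieldType) (p : {poly F}) : p != 0 ->
  exists q k h, coprimep q q^`() /\ q ^+ k = h * p.
Proof.
move=> pnz; have [r pE] := closed_field_poly_normal p.
set q := \prod_(z <- undup r) ('X - z%:P).
have H : forall r', {subset r' <= r} -> \prod_(z <- r') ('X - z%:P) %| q ^+ size r'.
  elim=> [|a r' IH] sub; first by rewrite big_nil dvd1p.
  rewrite big_cons /= exprS; apply: dvdp_mul.
    rewrite dvdp_XsubCl root_prod_XsubC mem_undup; apply: sub; exact: mem_head.
  by apply: IH => z zr; apply: sub; rewrite inE zr orbT.
have : p %| q ^+ size r by rewrite pE dvdpZl ?lead_coef_eq0 //; apply: H.
case/dvdpP => h hE; exists q, (size r), h; split => //.
have := separable_prod_XsubC (undup r); rewrite undup_uniq.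
by rewrite unlock.
Qed.

Lemma sq_in (V : choiceType) (G : PolyRing V -> Prop) (y : PolyRing V) (p : {poly C}) :
  radical_ideal G -> p != 0 -> in_ideal G (ev (@malgC (cmonom V) C) y p) ->
  exists q, coprimep q q^`() /\ in_ideal G (ev (@malgC (cmonom V) C) y q).
Proof.
move=> rad pnz pin; have [q [k [h [cop qE]]]] := @sqfreeF (C : closedFieldType) p pnz.
exists q; split.
  exact: cop.
apply: (rad _ k).
rewrite -evXn.
rewrite qE.
rewrite evM. apply: idlM. exact: pin.
Qed.

Lemma idl_subsub (R : comPzRingType) (G : R -> Prop) a b :
  in_ideal G a -> in_ideal G (a - b) -> in_ideal G b.
Proof.
move=> ha hab; have -> : b = a - (a - b) by rewrite opprB addrC subrK.
exact: idlB.
Qed.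

Lemma gen_final (R S : comNzRingType) (e : R -> S) (J : S -> Prop) :
  {morph e : x y / x + y} -> {morph e : x y / x * y} -> e 1 = 1 ->
  forall a b c d0 (z w : S), a * b + c * d0 = 1 -> w = e d0 * z ->
  in_ideal J (e b) -> in_ideal J w -> in_ideal J z.
Proof.
move=> eD eM e1 a b c d0 z w h hw hb hw'.
have -> : z = e a * (e b * z) + e c * w.
  by rewrite hw mulrA mulrA -!eM -mulrDl -eD h e1 mul1r.
apply: idlD; apply: idlM; last exact: hw'.
exact: idlMr.
Qed.

Lemma dot1D n m (a b : Pxu n m) : dot1 (a + b) = dot1 a + dot1 b.
Proof. exact: (TD_add _ (@emb_1D n m)). Qed.
Lemma dot1M n m (a b : Pxu n m) : dot1 (a * b) = emb_1 a * dot1 b + emb_1 b * dot1 a.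
Proof. exact: (TD_mul _ (@emb_1D n m) (@emb_1M n m)). Qed.
Lemma dot10 n m : dot1 (0 : Pxu n m) = 0.
Proof. exact: TD0. Qed.

Lemma dot_in n m s (f : 'I_n -> Pxu n m) (g : 'I_s -> Pxu n m) h :
  in_ideal (fun h : Pxu n m => exists i : 'I_s, h = g i) h ->
  in_ideal (gens_1 f g) (dot1 h) /\ in_ideal (gens_1 f g) (emb_1 h).
Proof.
move=> hin; apply: (hin (fun h => in_ideal (gens_1 f g) (dot1 h) /\ in_ideal (gens_1 f g) (emb_1 h))).
- split.
  + split; first by rewrite dot10; apply: idl0.
    by rewrite (morph0 (@emb_1D n m)); apply: idl0.
  + move=> a b [ha1 ha2] [hb1 hb2]; split.
      rewrite dot1D; exact: (idlD ha1 hb1).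
    rewrite emb_1D; exact: (idlD ha2 hb2).
  + move=> r a [ha1 ha2]; split.
      rewrite dot1M; apply: idlD; first exact: (idlM _ ha1).
      exact: (idlMr _ ha2).
    rewrite emb_1M; exact: (idlM _ ha2).
- move=> b [i ->]; split; apply: idl_gen; [apply: Or33|apply: Or32]; exists i; reflexivity.
Qed.

Lemma key n m s (f : 'I_n -> Pxu n m) (g : 'I_s -> Pxu n m) :
  radical_ideal (fun h : Pxu n m => exists i : 'I_s, h = g i) ->
  zero_dim_ideal (fun h : Pxu n m => exists i : 'I_s, h = g i) ->
  forall j : 'I_n, in_ideal (gens_1 f g) (var ((inl j : Vb n m), ord_max)).
Proof.
move=> Hrad Hzd j.
set y : Pxu n m := var (inl j : Vb n m).
have [p [pnz pin]] := zd_poly y Hzd.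
have [q [cop qin]] := sq_in Hrad pnz pin.
have [[u1 u2] /= Hb] := Bezout_eq1_coprimepP _ _ cop.
have [hd he] := dot_in f qin.
set kap := @malgC (cmonom (Vb n m)) C.
have hder : dot1 (ev kap y q) = emb_1 (ev kap y q^`()) * var ((inl j : Vb n m), ord_max).
  rewrite (@ev_der _ _ kap _ _ y (@emb_1D n m) (@emb_1M n m)).
  - congr (_ * _); rewrite /dot1 TD_var; [reflexivity|exact: emb_1D|exact: emb_11].
  - exact: dot1D.
  - exact: dot1M.
  - move=> c; apply: TD_C; exact: emb_1D.
have hb := @ev_bez _ kap y _ _ _ _ Hb.
have := gen_final (@emb_1D n m) (@emb_1M n m) (@emb_11 n m) hb hder.
move=> HH; exact: (HH _ he hd).
Qed.


Lemma psi_var n m (v : Vb n m) (i : 'I_2) :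
  psi (var ((v, i) : Vb n m * 'I_2)) = var ((v, nat_of_ord i) : Vb n m * nat).
Proof. by rewrite /psi sub_var. Qed.

Lemma phi_varS n m (v : Vb n m) k :
  phi (var ((v, k.+1) : Vb n m * nat)) = 0.
Proof. by rewrite /phi sub_var. Qed.

Theorem proposition3p1 (n m s : nat) (f : 'I_n -> Pxu n m) (g : 'I_s -> Pxu n m) :
  radical_ideal (fun h : Pxu n m => exists i : 'I_s, h = g i) ->
  zero_dim_ideal (fun h : Pxu n m => exists i : 'I_s, h = g i) ->
  (in_diff_ideal (@Dder n m) (gens_D f g) 1 <-> in_ideal (gens_1 f g) 1).
Proof.
move=> Hrad Hzd; split.
- move=> H1.
  pose FG := fun h : Pxu n m => (exists j, h = f j) \/ (exists i, h = g i).
  have FG1 : in_ideal FG 1.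
    rewrite -(@phi1 n m); apply: (H1 (fun p => in_ideal FG (phi p))).
    + split.
      * by rewrite (morph0 (@phiD n m)); apply: idl0.
      * by move=> x y hx hy; rewrite phiD; apply: idlD.
      * by move=> r x hx; rewrite phiM; apply: idlM.
    + by move=> b _; rewrite phi_Dder; apply: idl0.
    + move=> b [[j ->]|[i ->]].
      * rewrite (morphB' (@phiD n m)) phi_varS phi_embD.
        by apply: idlB; [apply: idl0|apply: idl_gen; left; exists j].
      * by rewrite phi_embD; apply: idl_gen; right; exists i.
  rewrite -(@emb_11 n m).
  apply: (idl_transport (@emb_1D n m) (@emb_1M n m)) FG1.
  move=> b [[j ->]|[i ->]].
  + apply: (idl_subsub (@key n m s f g Hrad Hzd j)).
    by apply: idl_gen; apply: Or31; exists j.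

  + by apply: idl_gen; apply: Or32; exists i.
- move=> H1 I HI HD HG.
  rewrite -(@psi1 n m); apply: (H1 (fun p => I (psi p))).
  + case: HI => I0 ID IM; split.
    * by rewrite (morph0 (@psiD n m)).
    * by move=> x y hx hy; rewrite psiD; apply: ID.
    * by move=> r x hx; rewrite psiM; apply: IM.
  + move=> b [[j ->]|[i ->]|[i ->]].
    * rewrite (morphB' (@psiD n m)) psi_var psi_emb1.
      by apply: HG; left; exists j.
    * by rewrite psi_emb1; apply: HG; right; exists i.
    * by rewrite psi_dot1; apply: HD; apply: HG; right; exists i.
Qed.
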